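(* Let $(\bar A,\bar B=\mathbb I_m,\bar C=\mathbb I_p)$ be a structured system whose DAG of SCCs $\mathcal D_A$ is a hierarchical network, with feedback cost matrix $P$. If $\mathcal N_i$ and $\mathcal N_k$ are two distinct vertices of $\mathcal D_A$ in the same layer $L_f$, then $A(\mathcal N_i)\cap A(\mathcal N_k)=\emptyset$.
   Context: Dedicated: each column of $\bar B\in\{0,\star\}^{n\times m}$ and each row of $\bar C\in\{0,\star\}^{p\times n}$ has exactly one $\star$. Edges: $(x_j,x_i)$ iff $\bar A_{ij}=\star$, $(u_j,x_i)$ iff $\bar B_{ij}=\star$, $(x_j,y_i)$ iff $\bar C_{ij}=\star$. $\mathcal D_A$: vertices are the SCCs of the state digraph, with edges induced by edges between their states. Hierarchical network: a root with no incoming edge, every other vertex has exactly one parent. Layer $L_f$ = set of vertices at distance (number of edges of a shortest directed path) $f-1$ from the root. Ancestor/descendant via directed paths (including the vertex itself). For a vertex $\mathcal N$: $U(\mathcal N)$ = inputs with an edge into a state of an ancestor SCC of $\mathcal N$; $Y(\mathcal N)$ = outputs with an edge from a state of a descendant SCC of $\mathcal N$; $A(\mathcal N)=\{(y_j,u_i):y_j\in Y(\mathcal N),u_i\in U(\mathcal N)\}$. *)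

(* Defs.v *)
From mathcomp Require Import all_boot.
Set Implicit Arguments. Unset Strict Implicit. Unset Printing Implicit Defensive.

(* Abar i j = true  <->  \bar A_{ij} = star  <->  edge (x_j, x_i).
   Bbar i j = true  <->  \bar B_{ij} = star  <->  edge (u_j, x_i).
   Cbar i j = true  <->  \bar C_{ij} = star  <->  edge (x_j, y_i). *)

Definition state_edge n (Abar : 'I_n -> 'I_n -> bool) : rel 'I_n :=
  fun j i => Abar i j.

Definition scc_of n (Abar : 'I_n -> 'I_n -> bool) (x : 'I_n) : {set 'I_n} :=
  [set y | connect (state_edge Abar) x y && connect (state_edge Abar) y x].

Definition sccs n (Abar : 'I_n -> 'I_n -> bool) : {set {set 'I_n}} :=
  [set scc_of Abar x | x : 'I_n].

Definition dag_edge n (Abar : 'I_n -> 'I_n -> bool) : rel {set 'I_n} :=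
  fun S T => [&& S \in sccs Abar, T \in sccs Abar, S != T &
                 [exists x in S, exists y in T, state_edge Abar x y]].

Definition hierarchical_root n (Abar : 'I_n -> 'I_n -> bool) (r : {set 'I_n}) :=
  [/\ r \in sccs Abar,
      forall S, ~~ dag_edge Abar S r &
      forall N, N \in sccs Abar -> N != r ->
        #|[set S | dag_edge Abar S N]| = 1].

Definition hierarchical n (Abar : 'I_n -> 'I_n -> bool) :=
  exists r, hierarchical_root Abar r.

Definition dag_walk n (Abar : 'I_n -> 'I_n -> bool) (k : nat) (S T : {set 'I_n}) :=
  exists s : seq {set 'I_n}, [/\ size s = k, path (dag_edge Abar) S s & last S s = T].

(* N belongs to layer L_f, i.e. its distance from the root r is f-1 *)
Definition in_layer n (Abar : 'I_n -> 'I_n -> bool) (r : {set 'I_n}) (f : nat)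
  (N : {set 'I_n}) :=
  [/\ N \in sccs Abar, dag_walk Abar f.-1 r N &
      forall k, k < f.-1 -> ~ dag_walk Abar k r N].

Definition ancestor n (Abar : 'I_n -> 'I_n -> bool) (S N : {set 'I_n}) :=
  connect (dag_edge Abar) S N.

Definition Uset n m (Abar : 'I_n -> 'I_n -> bool) (Bbar : 'I_n -> 'I_m -> bool)
  (N : {set 'I_n}) : {set 'I_m} :=
  [set j : 'I_m | [exists S in sccs Abar,
       ancestor Abar S N && [exists i in S, Bbar i j]]].

Definition Yset n p (Abar : 'I_n -> 'I_n -> bool) (Cbar : 'I_p -> 'I_n -> bool)
  (N : {set 'I_n}) : {set 'I_p} :=
  [set i : 'I_p | [exists S in sccs Abar,
       ancestor Abar N S && [exists j in S, Cbar i j]]].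

Definition Aset n m p (Abar : 'I_n -> 'I_n -> bool) (Bbar : 'I_n -> 'I_m -> bool)
  (Cbar : 'I_p -> 'I_n -> bool) (N : {set 'I_n}) : {set 'I_p * 'I_m} :=
  setX (Yset Abar Cbar N) (Uset Abar Bbar N).

(* identity star pattern, \bar B = I_m (m = n), \bar C = I_p (p = n) *)
Definition id_pattern n : 'I_n -> 'I_n -> bool := fun i j => i == j.

(* Main.v *)
Require Import Defs.
From mathcomp Require Import all_boot.
Set Implicit Arguments. Unset Strict Implicit. Unset Printing Implicit Defensive.

Section S.
Variables (n : nat) (Abar : 'I_n -> 'I_n -> bool) (r : {set 'I_n}).
Hypothesis hr : hierarchical_root Abar r.
Local Notation e := (dag_edge Abar).

Lemma indeg1 X Y Z : e X Z -> e Y Z -> X = Y.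
Proof.
case: hr => _ h2 h3 hX hY.
have Zs : Z \in sccs Abar by case/and4P: hX.
case: (eqVneq Z r) => [Er|Nr].
  by subst Z; move: (h2 X); rewrite hX.
move/eqP: (h3 Z Zs Nr); case/cards1P => x Ex.
have : X \in [set S | e S Z] by rewrite inE.
have : Y \in [set S | e S Z] by rewrite inE.
by rewrite Ex !inE => /eqP -> /eqP ->.
Qed.

Lemma start_unique k : forall (s s' : seq {set 'I_n}) S S',
  size s = k -> size s' = k -> path e S s -> path e S' s' ->
  last S s = last S' s' -> S = S'.
Proof.
elim: k => [|k IH] s s' S S'.
  by case: s => // ; case: s' => //.
case/lastP: s => [//|t x]; case/lastP: s' => [//|t' x'].
rewrite !size_rcons !rcons_path !last_rcons => [[st] [st']].
case/andP=> p1 e1; case/andP=> p2 e2 Ex; subst x'.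
apply: (IH t t') => //; exact: indeg1 e1 e2.
Qed.

Lemma len_unique (s s' : seq {set 'I_n}) T :
  path e r s -> path e r s' -> last r s = T -> last r s' = T ->
  size s = size s'.
Proof.
have key : forall (s s' : seq {set 'I_n}), path e r s -> path e r s' ->
   last r s = last r s' -> size s < size s' -> False.
  move=> a b pa pb El lt.
  set d := size b - size a.
  have : path e r (take d b ++ drop d b) by rewrite cat_take_drop.
  rewrite cat_path => /andP [p1 p2].
  have El' : last (last r (take d b)) (drop d b) = last r a.
    by rewrite -last_cat cat_take_drop El.
  have Sd : size (drop d b) = size a.
    by rewrite size_drop /d subKn // ltnW.
  have := start_unique (erefl _) Sd pa p2 (esym El').
  have : 0 < size (take d b).
    rewrite size_take /d; case: ifP => _; first by rewrite subn_gt0.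
    by apply: leq_trans lt; rewrite ltnS.
  case/lastP: (take d b) p1 => [//|t x].
  rewrite rcons_path last_rcons => /andP [_ ex] _ Ex.
  case: hr => _ h2 _. by move: (h2 (last r t)); rewrite -Ex in ex; rewrite ex.
move=> ps ps' E E'.
case: (ltngtP (size s) (size s')) => // lt.
- by exfalso; apply: (key s s') => //; rewrite E E'.
- by exfalso; apply: (key s' s) => //; rewrite E E'.
Qed.

Lemma scc_eq x y : y \in scc_of Abar x -> scc_of Abar x = scc_of Abar y.
Proof.
rewrite inE => /andP [xy yx]; apply/setP => z; rewrite !inE.
apply/andP/andP => [[xz zx]|[yz zy]]; split.
- exact: connect_trans yx xz.
- exact: connect_trans zx xy.
- exact: connect_trans xy yz.
- exact: connect_trans zy yx.
Qed.

End S.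

Theorem corollary3 (n : nat) (Abar : 'I_n -> 'I_n -> bool) (r : {set 'I_n})
  (f : nat) (Ni Nk : {set 'I_n}) :
  hierarchical_root Abar r ->
  in_layer Abar r f Ni -> in_layer Abar r f Nk -> Ni != Nk ->
  Aset Abar (@id_pattern n) (@id_pattern n) Ni
    :&: Aset Abar (@id_pattern n) (@id_pattern n) Nk = set0.
Proof.
move=> hr [_ [si [szi pi li]] _] [_ [sk [szk pk lk]] _] neq.
apply/setP => [[y u]]; rewrite !inE /=.
apply/negP => /andP [/andP [Yi _] /andP [Yk _]].
move: Yi Yk.
case/exists_inP => S1 S1s /andP [c1 /exists_inP [j1 j1S /eqP E1]].
case/exists_inP => S2 S2s /andP [c2 /exists_inP [j2 j2S /eqP E2]].
subst j1 j2.
have ES : S1 = S2.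
  case/imsetP: S1s j1S => x1 _ -> h1.
  case/imsetP: S2s j2S => x2 _ -> h2.
  by rewrite (scc_eq h1) (scc_eq h2).
subst S2.
case/connectP: c1 => a pa la.
case/connectP: c2 => b pb lb.
have pia : path (dag_edge Abar) r (si ++ a) by rewrite cat_path pi li pa.
have pkb : path (dag_edge Abar) r (sk ++ b) by rewrite cat_path pk lk pb.
have := len_unique hr pia pkb.
rewrite !last_cat li lk -la -lb => /(_ _ erefl erefl).
rewrite !size_cat szi szk => /eqP; rewrite eqn_add2l => /eqP sab.
have := start_unique hr sab (erefl _) pa pb.
by rewrite -la -lb => /(_ erefl) Eik; rewrite Eik eqxx in neq.
Qed.
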